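(* Let $q=p^n$ be a prime power and $g\ge 2$. Let $P(t)$ be a Weil polynomial of degree $2g$, written as $P(t)=\prod_{i=1}^g(t^2+x_it+q)$ where $x_i=-(\omega_i+\overline{\omega_i})$ and $\omega_1,\overline{\omega_1},\dots,\omega_g,\overline{\omega_g}$ are its roots, and let $f(t)=\prod_{i=1}^g(t+x_i)$ (a monic polynomial with integer coefficients). Suppose $P(t)\neq (t-\sqrt q)^2(t+\sqrt q)^2$. Then $P(t)$ is irreducible over $\mathbb{Q}$ if and only if $f(t)$ is irreducible over $\mathbb{Q}$.
   Context: A $q$-Weil number is an algebraic integer $\omega$ such that $|\iota(\omega)|=\sqrt q$ for every embedding $\iota:\mathbb{Q}(\omega)\to\mathbb{C}$. A Weil polynomial (of degree $2g$, for the prime power $q$) is a monic polynomial with integer coefficients whose multiset of complex roots can be written as $\{\omega_1,\overline{\omega_1},\dots,\omega_g,\overline{\omega_g}\}$ with each $\omega_i$ a $q$-Weil number. *)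

(* Defs.v *)
From HB Require Import structures.
From mathcomp Require Import all_boot all_order all_algebra all_field.
Unset Printing Implicit Defensive.
Import Order.TTheory GRing.Theory Num.Theory.
Local Open Scope ring_scope.

(* Embeddings Q(w) -> C are exactly the
   restrictions of ring automorphisms of the algebraic closure algC. *)
Definition qWeil_number (q : nat) (w : algC) : Prop :=
  w \in Aint /\ forall nu : {rmorphism algC -> algC}, `|nu w| = sqrtC q%:R.

Definition polyC_of_int (P : {poly int}) : {poly algC} := map_poly intr P.

Definition Weil_roots (q g : nat) (P : {poly int}) (w : 'I_g -> algC) : Prop :=
  P \is monic /\ (forall i, qWeil_number q (w i)) /\
  polyC_of_int P = \prod_(i < g) (('X - (w i)%:P) * ('X - (Num.conj (w i))%:P)).

Definition irreducible_over_Q (P : {poly int}) : Prop :=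
  irreducible_poly (map_poly intr P : {poly rat}).

(* Main.v *)
Require Import Defs.
From HB Require Import structures.
From mathcomp Require Import all_boot all_order all_algebra all_field.
Import Order.TTheory GRing.Theory Num.Theory.
Local Open Scope ring_scope.
From Stdlib Require Import Lia.

Local Notation toC p := (map_poly (@ratr algC) p).
Lemma irr_dvd (p e : {poly rat}) (z : algC) :
  irreducible_poly p -> root (toC p) z -> root (toC e) z -> p %| e.
Proof.
move=> [_ Hirr] rp re.
have rd : root (toC (gcdp p e)) z by rewrite gcdp_map root_gcd rp re.
have sd : size (gcdp p e) != 1.
  by rewrite -(size_map_poly (@ratr algC)); apply/closed_rootP; exists z.
have := Hirr _ sd (dvdp_gcdl p e).
by move=> /eqp_dvdl <-; apply: dvdp_gcdr.
Qed.

Lemma irr_sep (f : {poly rat}) : irreducible_poly f -> separable_poly f.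
Proof.
move=> fI; have [sf Hirr] := fI.
have f0 : f != 0 by rewrite -size_poly_gt0 (ltn_trans _ sf).
rewrite unlock /coprimep; apply/negPn/negP => sd.
have He := Hirr _ sd (dvdp_gcdl f f^`()).
have Hff : f %| f^`() by rewrite -(eqp_dvdl _ He) dvdp_gcdr.
have [d0|dn0] := eqVneq f^`() 0.
  have := congr1 (fun p : {poly rat} => p`_(size f).-2) d0.
  rewrite coef_deriv coef0 prednK; last by rewrite -ltnS prednK // ltnW.
  move/eqP; rewrite mulrn_eq0 /=.
  have -> : f`_(size f).-1 == 0 = false by rewrite -lead_coefE lead_coef_eq0 (negPf f0).
  by rewrite orbF -(subnKC sf).
have := dvdp_leq dn0 Hff; rewrite leqNgt (lt_size_deriv f0) //.
Qed.
Fixpoint ab (c : rat) (n : nat) : {poly rat} * {poly rat} :=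
  if n is m.+1 then ('X * (ab c m).1 + (ab c m).2, - c%:P * (ab c m).1) else (0, 1).

Lemma ab_eval c n (y z : algC) : z ^+ 2 = y * z - ratr c ->
  z ^+ n = (toC (ab c n).1).[y] * z + (toC (ab c n).2).[y].
Proof.
move=> hz; elim: n => [|n IH] /=.
  rewrite expr0 map_poly0 rmorph1 horner0 hornerC.
  by rewrite mul0r add0r.
rewrite exprSr IH !rmorphD !rmorphM /= rmorphN /= !map_polyC map_polyX /=.
rewrite hornerD hornerM hornerX hornerM hornerN hornerC mulrDl -mulrA -expr2 hz.
set a := (map_poly _ _).[y]; set b := (map_poly _ _).[y].
rewrite mulrBr mulrDl mulrA [a * y]mulrC addrAC mulNr [a * _]mulrC.
by [].
Qed.

Definition abA c (D : {poly rat}) := \sum_(i < size D) D`_i *: (ab c i).1.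
Definition abB c (D : {poly rat}) := \sum_(i < size D) D`_i *: (ab c i).2.

Lemma D_eval c (D : {poly rat}) (y z : algC) : z ^+ 2 = y * z - ratr c ->
  (toC D).[z] = (toC (abA c D)).[y] * z + (toC (abB c D)).[y].
Proof.
move=> hz; rewrite horner_coef size_map_poly /abA /abB !rmorph_sum !horner_sum.
rewrite big_distrl -big_split /=; apply: eq_bigr => i _.
by rewrite coef_map (@ab_eval c i y z hz) !map_polyZ !hornerZ mulrDr mulrA.
Qed.

Lemma conj_eval (r : {poly rat}) (y : algC) : y^* = y -> ((toC r).[y])^* = (toC r).[y].
Proof.
move=> hy; rewrite -horner_map /= hy -map_poly_comp; congr (_.[_]).
by apply: eq_map_poly => x /=; rewrite fmorph_rat.
Qed.
Definition Hq c (D : {poly rat}) :=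
  \sum_(i < size D) D`_i *: ('X^((size D).-1 - i) * ('X^2 + c%:P) ^+ i).

Lemma Hq_eval c (D : {poly rat}) (y w : algC) : w ^+ 2 + ratr c = w * y ->
  (toC (Hq c D)).[w] = w ^+ (size D).-1 * (toC D).[y].
Proof.
move=> hw; rewrite rmorph_sum horner_sum (horner_coef (toC D)) size_map_poly big_distrr.
apply: eq_bigr => i _ /=.
rewrite map_polyZ rmorphM !rmorphXn rmorphD /= map_polyX map_polyC /=.
rewrite hornerZ hornerM !horner_exp map_polyXn hornerD hornerXn hornerC hornerX hw coef_map /=.
set r := ratr _; rewrite exprMn [w ^+ _ * (_ * _)]mulrA -exprD subnK; last by rewrite -ltnS prednK // (leq_ltn_trans _ (ltn_ord i)).
by rewrite mulrA [r * _]mulrC -mulrA.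
Qed.

Lemma Hq_nz c (D : {poly rat}) : c != 0 -> D != 0 -> Hq c D != 0.
Proof.
move=> c0 D0; apply/negP => /eqP H0.
have := congr1 (fun p => p.[0]) H0; rewrite horner0 /Hq horner_sum.
have ld : ((size D).-1 < size D)%N by rewrite prednK ?size_poly_gt0.
rewrite (bigD1 (Ordinal ld)) //= big1 ?addr0; last first.
  move=> i /eqP ni; rewrite hornerZ hornerM hornerXn expr0n.
  have -> : ((size D).-1 - i == 0)%N = false.
    apply/negP; rewrite subn_eq0 => le; apply: ni; apply: val_inj => /=.
    by apply/eqP; rewrite eqn_leq le -ltnS prednK ?ltn_ord // size_poly_gt0.
  by rewrite mul0r mulr0.
rewrite subnn hornerZ hornerM expr0 hornerC mul1r horner_exp hornerD hornerXn.
rewrite expr0n /= add0r; apply/eqP; rewrite mulf_eq0 negb_or expf_neq0 ?hornerC //.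
by rewrite andbT -lead_coefE lead_coef_eq0.
Qed.

Lemma Hq_size c (D : {poly rat}) : (size (Hq c D) <= (size D).-1.*2.+1)%N.
Proof.
rewrite /Hq; apply: (big_ind (fun p : {poly rat} => (size p <= (size D).-1.*2.+1)%N)).
- by rewrite size_poly0.
- by move=> p1 p2 h1 h2; apply: (leq_trans (size_add _ _)); rewrite geq_max h1 h2.
move=> i _; apply: (leq_trans (size_scale_leq _ _)).
apply: (leq_trans (size_mul_leq _ _)); rewrite size_polyXn.
have := size_exp_leq ('X^2 + c%:P) i; rewrite size_XnaddC // => he.
have li : (i <= (size D).-1)%N by rewrite -ltnS prednK // (leq_ltn_trans _ (ltn_ord i)).
move: he li; set d := (size D).-1; set m := size _; move: (nat_of_ord i) => k.
rewrite -addnn -!(plusE, minusE, multE) /=.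
move=> /ssrnat.leP h1 /ssrnat.leP h2; apply/ssrnat.leP; simpl in *.
lia.
Qed.
Lemma t2 (g : nat) (y : 'I_g -> algC) : uniq (map y (enum 'I_g)) -> injective y.
Proof. move=> h; apply/injectiveP. by rewrite /injectiveb /dinjectiveb. Qed.
Lemma alg1 (R : comNzRingType) (X a b : R) : (X - a) * (X - b) = X ^+ 2 - (a + b) * X + a * b.
Proof.
rewrite mulrBl !mulrBr opprB addrA expr2 mulrDl opprD addrA [b * X]mulrC.
by rewrite addrAC; congr (_ + _); rewrite addrAC.
Qed.
Lemma alg2 (R : comNzRingType) (X u qc s : R) : u ^+ 2 = qc *+ 4 -> s ^+ 2 = qc ->
  (X ^+ 2 - u * X + qc) * (X ^+ 2 - (- u) * X + qc) = (X - s) ^+ 2 * (X + s) ^+ 2.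
Proof.
move=> hu hs.
rewrite -exprMn -subr_sqr hs mulNr opprK.
rewrite [X ^+ 2 - u * X + qc]addrAC [X ^+ 2 + u * X + qc]addrAC.
rewrite -subr_sqr exprMn hu.
rewrite -(subrK ((X ^+ 2 - qc) ^+ 2) ((X ^+ 2 + qc) ^+ 2)) subr_sqrDB.
by rewrite mulrnAl [qc * _]mulrC addrAC subrr add0r.
Qed.

Theorem mainTheorem3 (p n g : nat) (P f : {poly int}) (w : 'I_g -> algC) :
  prime p -> (0 < n)%N -> (2 <= g)%N ->
  Weil_roots (p ^ n)%N g P w ->
  (* f(t) = prod_i (t + x_i) with x_i = -(w_i + conj w_i) *)
  polyC_of_int f = \prod_(i < g) ('X + (- (w i + Num.conj (w i)))%:P) ->
  polyC_of_int P != ('X - (sqrtC (p ^ n)%N%:R)%:P) ^+ 2 * ('X + (sqrtC (p ^ n)%N%:R)%:P) ^+ 2 ->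
  (irreducible_over_Q P <-> irreducible_over_Q f).
Proof.
move=> pp n0 g2 WR Hf HPne; have [Pmon [Hw HP]] := WR.
set q := (p ^ n)%N in Hw HPne *.
have q0 : (q != 0)%N by rewrite -lt0n expn_gt0 prime_gt0.
set qC : algC := q%:R.
set qQ : rat := q%:R.
have qQC : ratr qQ = qC by rewrite rmorph_nat.
have qQ0 : qQ != 0 by rewrite pnatr_eq0.
have hww : forall i, w i * (w i)^* = qC.
  by move=> i; have [_ hn] := Hw i; rewrite -normCK (hn idfun) sqrtCK.
pose y : 'I_g -> algC := fun i => w i + (w i)^*.
have yreal : forall i, (y i)^* = y i.
  by move=> i; rewrite /y rmorphD /= conjCK addrC.
have quad1 : forall i, w i ^+ 2 = y i * w i - ratr qQ.
  move=> i; rewrite qQC expr2 /y mulrDl [_^* * _]mulrC hww; exact: (esym (addrK _ _)).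
have quad2 : forall i, (w i)^* ^+ 2 = y i * (w i)^* - ratr qQ.
  by move=> i; rewrite qQC expr2 /y mulrDl hww [qC + _]addrC; exact: (esym (addrK _ _)).
set PQ := map_poly intr P : {poly rat}.
set fQ := map_poly intr f : {poly rat}.
have toCP : toC PQ = polyC_of_int P.
  by rewrite -map_poly_comp; apply: eq_map_poly => x /=; rewrite ratr_int.
have toCf : toC fQ = polyC_of_int f.
  by rewrite -map_poly_comp; apply: eq_map_poly => x /=; rewrite ratr_int.
set e := enum 'I_g.
set rs := map w e ++ map (fun i => (w i)^*) e.
have PCe : toC PQ = \prod_(z <- rs) ('X - z%:P).
  by rewrite toCP HP /rs /e big_cat !big_map -enumT !big_enum big_split.
have fCe : toC fQ = \prod_(z <- map y e) ('X - z%:P).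
  rewrite toCf Hf /e big_map -?enumT big_enum; apply: eq_bigr => i _; by rewrite polyCN.
have sP : size PQ = (g + g).+1.
  by rewrite -(size_map_poly (@ratr algC)) PCe size_prod_XsubC size_cat !size_map /e -?enumT size_enum_ord.
have sf : size fQ = g.+1.
  by rewrite -(size_map_poly (@ratr algC)) fCe size_prod_XsubC size_map /e -?enumT size_enum_ord.
have PQ0 : PQ != 0 by rewrite -size_poly_gt0 sP.
have fQ0 : fQ != 0 by rewrite -size_poly_gt0 sf.
have rootP : forall z, root (toC PQ) z -> exists i, z = w i \/ z = (w i)^*.
  move=> z; rewrite PCe root_prod_XsubC mem_cat => /orP[] /mapP[i _ ->]; exists i; by [left|right].
have rootf : forall z, root (toC fQ) z -> exists i, z = y i.
  by move=> z; rewrite fCe root_prod_XsubC => /mapP[i _ ->]; exists i.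
have rootf' : forall i, root (toC fQ) (y i).
  by move=> i; rewrite fCe root_prod_XsubC map_f ?mem_enum.
have rootP1 : forall i, root (toC PQ) (w i).
  by move=> i; rewrite PCe root_prod_XsubC mem_cat map_f ?mem_enum.
split.
- move=> PI; split; first by rewrite sf ltnS (leq_trans _ g2).
  move=> D sD Ddvd; apply/negPn/negP => nE.
  have D0 : D != 0 by apply: contraNneq fQ0 => D0; move: Ddvd; rewrite D0 dvd0p.
  have ltD : (size D < size fQ)%N.
    by rewrite ltn_neqAle (dvdp_leq fQ0 Ddvd) (dvdp_size_eqp Ddvd) nE.
  have [z rz] : exists z, root (toC D) z.
    by apply/closed_rootP; rewrite size_map_poly.
  have [k zk] : exists k, z = y k.
    by apply: rootf; apply: root_dvdp rz; rewrite dvdp_map.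
  have hk : w k ^+ 2 + ratr qQ = w k * y k by rewrite quad1 subrK mulrC.
  have rE : root (toC (Hq qQ D)) (w k).
    by rewrite /root (@Hq_eval qQ D (y k) (w k) hk) -zk (eqP rz) mulr0.
  have := @irr_dvd PQ (Hq qQ D) (w k) PI (rootP1 k) rE => /(dvdp_leq (@Hq_nz qQ D qQ0 D0)).
  move=> /leq_trans /(_ (Hq_size qQ D)); rewrite sP.
  move: ltD; rewrite sf; move: (size D) => m.
  have := g2; rewrite -addnn; case: m => [|m] /= => /ssrnat.leP h0 /ssrnat.leP h1 /ssrnat.leP; rewrite -!plusE => h2; lia.
- move=> fI.
  have sepf : uniq (map y e).
    by rewrite -separable_prod_XsubC -fCe separable_map; apply: irr_sep.
  have yinj : injective y by apply: t2; exact: sepf.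
  have NR : forall i, (w i)^* != w i.
    move=> i; apply/negP => /eqP hc.
    have hw2 : w i ^+ 2 = qC by rewrite expr2 -{2}hc hww.
    have hy2 : y i ^+ 2 = qC *+ 4 by rewrite /y hc -mulr2n exprMn_n hw2.
    pose R : {poly rat} := 'X^2 - (qQ *+ 4)%:P.
    have toCR : toC R = 'X^2 - (qC *+ 4)%:P.
      by rewrite /R rmorphB /= map_polyXn map_polyC /= rmorphMn /qQ rmorph_nat.
    have rR : root (toC R) (y i) by rewrite toCR /root !hornerE hy2 subrr.
    have fR := @irr_dvd fQ R (y i) fI (rootf' i) rR.
    have sR : size R = 3 by rewrite size_XnsubC.
    have R0 : R != 0 by rewrite -size_poly_gt0 sR.
    have g2' : g = 2.
      by apply/eqP; rewrite eqn_leq g2 andbT; have := dvdp_leq R0 fR; rewrite sf sR.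
    have fmon : fQ \is monic by rewrite -(map_monic (@ratr algC)) fCe monic_prod_XsubC.
    have Rmon : R \is monic by rewrite monicXnsubC.
    have fRe : fQ = R.
      by apply/eqP; rewrite -(eqp_monic fmon Rmon) -(dvdp_size_eqp fR) sf sR g2'.
    have ysq : forall j, y j ^+ 2 = qC *+ 4.
      move=> j; have := rootf' j; rewrite fRe toCR /root !hornerE subr_eq0.
      by move/eqP.
    subst g.
    apply/negP: HPne; apply/negPn/eqP.
    rewrite HP big_ord_recl big_ord_recl big_ord0 mulr1.
    set a := ord0; set b := lift ord0 ord0.
    have ab : a != b by rewrite /a /b neq_lift.
    have yab : y b = - y a.
      have /eqP := ysq a; rewrite -(ysq b) -subr_eq0 subr_sqr mulf_eq0 => /orP[].
        by rewrite subr_eq0 => /eqP /yinj hba; rewrite hba eqxx in ab.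
      by rewrite addrC addr_eq0; move/eqP.
    rewrite !alg1 -!polyCD -!polyCM !hww -[(w a + _)]/(y a) -[(w b + _)]/(y b) yab polyCN.
    apply: alg2; first by rewrite -polyC_exp ysq polyCMn.
    by rewrite -polyC_exp sqrtCK.
  split; first by rewrite sP ltnS addn_gt0 (leq_trans _ g2).
  move=> D sD Ddvd.
  have D0 : D != 0 by apply: contraNneq PQ0 => D0; move: Ddvd; rewrite D0 dvd0p.
  have [z rz] : exists z, root (toC D) z by apply/closed_rootP; rewrite size_map_poly.
  have rzP : root (toC PQ) z by apply: root_dvdp rz; rewrite dvdp_map.
  have [j hj] := rootP z rzP.
  have hz : z ^+ 2 = y j * z - ratr qQ by case: hj => ->; [apply: quad1 | apply: quad2].
  have DE := @D_eval qQ D (y j) z hz.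
  have a0 : (toC (abA qQ D)).[y j] = 0.
    apply/eqP; apply/negPn/negP => an0.
    have hab : (toC (abA qQ D)).[y j] * z = - (toC (abB qQ D)).[y j].
      by apply/eqP; rewrite -addr_eq0 -DE; exact: rz.
    have zE : z = - (toC (abB qQ D)).[y j] / (toC (abA qQ D)).[y j].
      by rewrite -hab [_ * z]mulrC mulfK.
    have cz : z^* = z.
      by rewrite {1}zE rmorphM rmorphN fmorphV /= !(fun r => @conj_eval r (y j) (yreal j)) -zE.
    case: hj cz => ->.
      by move/eqP; rewrite (negPf (NR j)).
    by rewrite conjCK => hc; move: (NR j); rewrite -hc eqxx.
  have b0 : (toC (abB qQ D)).[y j] = 0.
    by move: rz; rewrite /root DE a0 mul0r add0r => /eqP.
  have fA := @irr_dvd fQ (abA qQ D) (y j) fI (rootf' j) (introT eqP a0).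
  have fB := @irr_dvd fQ (abB qQ D) (y j) fI (rootf' j) (introT eqP b0).
  have Az : forall k, (toC (abA qQ D)).[y k] = 0.
    by move=> k; apply/eqP; apply: (root_dvdp _ (rootf' k)); rewrite dvdp_map.
  have Bz : forall k, (toC (abB qQ D)).[y k] = 0.
    by move=> k; apply/eqP; apply: (root_dvdp _ (rootf' k)); rewrite dvdp_map.
  have allr : all (root (toC D)) rs.
    apply/allP => x; rewrite mem_cat => /orP[] /mapP[k _ ->]; rewrite /root.
      by rewrite (@D_eval qQ D (y k) (w k) (quad1 k)) Az Bz mul0r addr0.
    by rewrite (@D_eval qQ D (y k) _ (quad2 k)) Az Bz mul0r addr0.
  have winj : injective w by move=> i1 i2 h; apply: yinj; rewrite /y h.
  have cwinj : injective (fun i => (w i)^*).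
    move=> i1 i2 /= h; apply: winj.
    by have := congr1 (fun x => x^*) h; rewrite /= !conjCK.
  have urs : uniq rs.
    rewrite cat_uniq (map_inj_uniq winj) (map_inj_uniq cwinj) enum_uniq andbT /=.
    apply/hasPn => x /mapP[k _ ->]; apply/mapP => [[l _ hl]].
    have ykl : y k = y l.
      by rewrite /y -hl conjCK addrC.
    by move: (NR k); rewrite hl (yinj _ _ ykl) eqxx.
  have dv : toC PQ %| toC D.
    by rewrite PCe; apply: uniq_roots_dvdp allr _; rewrite uniq_rootsE.
  rewrite dvdp_map in dv.
  by rewrite -dvdp_size_eqp // eqn_leq (dvdp_leq PQ0 Ddvd) (dvdp_leq D0 dv).
Qed.
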